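(* Let $n\ge 2$ and let $P$ be a partial $n$-Metric on a set $X$. Define $d:X\times X\to\mathbb{R}$ by $$d(x,y)=P(y,\langle x\rangle^{n-1})-P(\langle x\rangle^n)+P(x,\langle y\rangle^{n-1})-P(\langle y\rangle^n).$$ Then $d$ is a metric on $X$.
   Context: Notation: $\langle a\rangle^k$ denotes the $k$-tuple $(a,a,\dots,a)$, inserted into the argument list of a function. A partial $n$-Metric on $X$ is a function $P:X^n\to\mathbb{R}$ such that for all $x_1,\dots,x_n,a\in X$: (1) $P(\langle x_1\rangle^n)\le P(\langle x_1\rangle^{n-1},x_2)$; (2) $P(x_1,\dots,x_n)=P(x_{\pi(1)},\dots,x_{\pi(n)})$ for every permutation $\pi$ of $\{1,\dots,n\}$; (3) $P(\langle x_1\rangle^{n-1},x_2)=P(\langle x_1\rangle^n)$ and $P(\langle x_2\rangle^{n-1},x_1)=P(\langle x_2\rangle^n)$ if and only if $x_1=x_2$; (4) $P(x_1,\dots,x_n)\le P(x_1,\dots,x_{n-1},a)+P(\langle a\rangle^{n-1},x_n)-P(\langle a\rangle^n)$. *)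

(* Defs.v *)
From Stdlib Require Import Reals List Permutation.
Import ListNotations.
Open Scope R_scope.

(* An n-tuple of X is represented as a list of length n; P : list X -> R is
   only constrained on lists of length n. <a>^k is [repeat a k]. *)
Definition partial_n_metric {X : Type} (n : nat) (P : list X -> R) : Prop :=
  (forall x y : X, P (repeat x n) <= P (repeat x (n - 1)%nat ++ [y])) /\
  (forall l l' : list X, (length l = n)%nat -> Permutation l l' -> P l = P l') /\
  (forall x y : X,
      (P (repeat x (n - 1)%nat ++ [y]) = P (repeat x n) /\
       P (repeat y (n - 1)%nat ++ [x]) = P (repeat y n)) <-> x = y) /\
  (forall (l : list X) (xn a : X), (length l = n - 1)%nat ->
      P (l ++ [xn]) <= P (l ++ [a]) + P (repeat a (n - 1)%nat ++ [xn]) - P (repeat a n)).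

Definition pm_dist {X : Type} (n : nat) (P : list X -> R) (x y : X) : R :=
  P (y :: repeat x (n - 1)%nat) - P (repeat x n) + P (x :: repeat y (n - 1)%nat) - P (repeat y n).

Definition is_metric {X : Type} (d : X -> X -> R) : Prop :=
  (forall x y, 0 <= d x y) /\
  (forall x y, d x y = 0 <-> x = y) /\
  (forall x y, d x y = d y x) /\
  (forall x y z, d x z <= d x y + d y z).

(* Main.v *)
Require Import Defs.
From Stdlib Require Import Reals List Permutation Lra Lia.
Import ListNotations.

Lemma rep_snoc {X : Type} (a : X) (m : nat) : repeat a (S m) = repeat a m ++ [a].
Proof. induction m as [|m IH]; simpl; [reflexivity| rewrite <- IH; reflexivity]. Qed.

Theorem theorem2p13 (X : Type) (n : nat) (P : list X -> R) :
  (2 <= n)%nat -> partial_n_metric n P -> is_metric (pm_dist n P).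
Proof.
  intros Hn [H1 [H2 [H3 H4]]].
  destruct n as [|m]; [lia|].
  unfold is_metric, pm_dist.
  replace (S m - 1)%nat with m in * by lia.
  assert (Hp : forall x y, P (y :: repeat x m) = P (repeat x m ++ [y])).
  { intros x y. apply H2. simpl. rewrite repeat_length. reflexivity.
    apply Permutation_cons_append. }
  assert (Hq : forall x, P (repeat x (S m)) = P (repeat x m ++ [x])).
  { intros x. rewrite rep_snoc. reflexivity. }
  assert (HL : forall x : X, length (repeat x m) = m) by (intros; apply repeat_length).
  unfold is_metric, pm_dist.
  split; [|split; [|split]].
  - intros x y. rewrite !Hp. pose proof (H1 x y). pose proof (H1 y x). lra.
  - intros x y. rewrite !Hp. split.
    + intros H. apply H3. pose proof (H1 x y). pose proof (H1 y x). split; lra.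
    + intros ->. rewrite Hq. lra.
  - intros x y. rewrite !Hp. lra.
  - intros x y z. rewrite !Hp.
    pose proof (H4 (repeat x m) z y (HL x)).
    pose proof (H4 (repeat z m) x y (HL z)).
    lra.
Qed.
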